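(* Let $(x,y)$ be a random pair satisfying the linear-model assumption and the irrepresentable condition $\mu_{S^*}<1$ described in the context. Then for every $S\subseteq S^*$, $$\max_{j\notin S^*}|Z_j^S|\le \mu_{S^*}\max_{i\in S^*\setminus S}|Z_i^S|,$$ with the convention $\max\emptyset=0$.
   Context: $(x,y)$ is a random pair with $x\in\mathbb{R}^d$, $y\in\mathbb{R}$, both square integrable. Linear-model assumption: $\mathbb{E}[x]=0$, $y=\langle\beta^*,x\rangle+\epsilon$ for some $\beta^*\in\mathbb{R}^d$, with $\mathbb{E}[\epsilon\mid x]=0$. Let $S^*=\{i:\beta^*_i\neq 0\}$, $s^*=|S^*|$, $\Sigma$ the covariance matrix of $x$, and for $F\subseteq[d]$ let $\Sigma_F$ be the submatrix with rows and columns in $F$, $x_F$ the subvector of $x$ indexed by $F$, and $\mathrm{Cov}(x_F,x_j)\in\mathbb{R}^{|F|}$ the vector of covariances $\mathrm{Cov}(x_i,x_j)$, $i\in F$. Define $\mu_F=\max_{j\in[d]\setminus F}\|\Sigma_F^{-1}\mathrm{Cov}(x_F,x_j)\|_1$ (when $\Sigma_F$ is invertible). Irrepresentable condition: for all $F\subseteq[d]$ with $|F|=s^*$, $\Sigma_F$ is invertible and $0\le\mu_F<1$. Let $\mathcal{R}(\beta)=\mathbb{E}[(y-\langle x,\beta\rangle)^2]$, and for $S\subseteq S^*$ let $\beta^S\in\arg\min_{\mathrm{supp}(\beta)\subseteq S}\mathcal{R}(\beta)$. Define $Z_i^S=\mathbb{E}[x_i(y-\langle x,\beta^S\rangle)]$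 for $i\in[d]$. *)

(* Defs.v *)
From HB Require Import structures.
From mathcomp Require Import all_boot all_order all_algebra.
From mathcomp Require Import all_classical all_reals all_analysis.
Set Implicit Arguments. Unset Strict Implicit. Unset Printing Implicit Defensive.
Import Order.TTheory GRing.Theory Num.Theory.
Local Open Scope classical_set_scope.
Local Open Scope ring_scope.

Section lm.
Context (dT : measure_display) (T : measurableType dT) (R : realType)
  (P : probability T R) (d : nat).
Implicit Types (x : 'I_d -> T -> R) (y eps : T -> R) (b : 'I_d -> R)
  (F S : {set 'I_d}).

Definition dotx b x : T -> R := fun w => \sum_(i < d) b i * x i w.

Definition risk x y b : \bar R := 'E_P[fun w => (y w - dotx b x w) ^+ 2].

Definition Zcoef x y b (i : 'I_d) : R :=
  fine 'E_P[fun w => x i w * (y w - dotx b x w)].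

Definition supp b : {set 'I_d} := [set i | b i != 0].

Definition gen_sigma_x x : set_system T :=
  [set A | exists i : 'I_d, exists B : set R, measurable B /\ A = x i @^-1` B].

(* E[eps | x] = 0 : the integral of eps over every A in sigma(x) vanishes
   (eps integrable) *)
Definition cond_exp_zero x eps : Prop :=
  P.-integrable setT (fun w => (eps w)%:E) /\
  forall A, <<s gen_sigma_x x >> A -> (\int[P]_(w in A) (eps w)%:E)%E = 0%E.

Definition SigmaF x F : 'M[R]_#|F| :=
  \matrix_(i, j) fine (covariance P (x (enum_val i)) (x (enum_val j))).

Definition covF x F (j : 'I_d) : 'cV[R]_#|F| :=
  \col_i fine (covariance P (x (enum_val i)) (x j)).

Definition muF x F : R :=
  \big[Num.max/0]_(j | j \notin F)
     \sum_(k < #|F|) `|(invmx (SigmaF x F) *m covF x F j) k ord0|.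

Definition irrepresentable x (s : nat) : Prop :=
  forall F, #|F| = s -> SigmaF x F \in unitmx /\ 0 <= muF x F < 1.

End lm.

(* Main.v *)
Require Import Defs.
From HB Require Import structures.
From mathcomp Require Import all_boot all_order all_algebra.
From mathcomp Require Import all_classical all_reals all_analysis.
From mathcomp Require Import measurable_realfun lebesgue_integral lebesgue_measure.
From mathcomp Require Import ring lra.
Import Order.TTheory GRing.Theory Num.Theory.
Import numFieldNormedType.Exports.
Local Open Scope classical_set_scope.
Local Open Scope ring_scope.
Set Implicit Arguments. Unset Strict Implicit. Unset Printing Implicit Defensive.
Section orth.
Context (dT : measure_display) (T : measurableType dT) (R : realType)
  (P : probability T R).

Definition Good (h : T -> R) := P.-integrable setT (EFin \o h) /\
  (\int[P]_w (h w)%:E = 0)%E.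

Lemma good_ext (f h : T -> R) : f =1 h -> Good f -> Good h.
Proof. by move=> /funext ->. Qed.

Lemma good0 : Good (fun _ => 0).
Proof. split; [exact: integrable0 | exact: integral0]. Qed.

Lemma goodD (f h : T -> R) : Good f -> Good h -> Good (fun w => f w + h w).
Proof.
move=> [if0 f0] [ih h0]; split.
  have -> : EFin \o (fun w => f w + h w) = (EFin \o f) \+ (EFin \o h).
    by apply/funext => w /=; rewrite EFinD.
  exact: integrableD.
under eq_integral do rewrite EFinD.
by rewrite (integralD_EFin measurableT if0 ih) f0 h0 adde0.
Qed.

Lemma goodZ c (f : T -> R) : Good f -> Good (fun w => c * f w).
Proof.
move=> [if0 f0]; split.
  have -> : EFin \o (fun w => c * f w) = (fun w => c%:E * (EFin \o f) w)%E.
    by apply/funext => w /=; rewrite EFinM.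
  exact: integrableZl.
under eq_integral do rewrite EFinM.
by rewrite (integralZl measurableT if0) f0 mule0.
Qed.

Lemma good_sum (I : Type) (s : seq I) (F : I -> T -> R) :
  (forall i, Good (F i)) -> Good (fun w => \sum_(i <- s) F i w).
Proof.
move=> gF; elim: s => [|i s ih].
  apply: (@good_ext (fun _ => 0)); last exact: good0.
  by move=> w; rewrite big_nil.
have := goodD (gF i) ih; apply: good_ext.
  by move=> w; rewrite big_cons.
Qed.

Lemma good_indic (g eps : T -> R) (B : set R) :
  measurable_fun setT g -> measurable_fun setT eps ->
  P.-integrable setT (EFin \o eps) -> measurable B ->
  (\int[P]_(w in g @^-1` B) (eps w)%:E = 0)%E ->
  Good (fun w => eps w * \1_(g @^-1` B) w).
Proof.
move=> mg me ie mB H.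
have mA : measurable (g @^-1` B) by rewrite -(setTI (g @^-1` B)); exact: mg.
split.
  apply: le_integrable ie => //.
    by apply/measurable_EFinP; apply: measurable_funM => //; exact: measurable_indic.
  move=> w _ /=; rewrite lee_fin normrM indicE.
  by case: (_ \in _); rewrite ?normr1 ?normr0 ?mulr1 ?mulr0.
rewrite -H [RHS]integral_mkcond; apply: eq_integral => w _.
rewrite /patch indicE; case: (_ \in _) => /=; by rewrite ?mulr1 ?mulr0.
Qed.
Lemma mphi : measurable_fun setT (fun r : R => (Num.max r 0)%:E).
Proof.
apply/measurable_EFinP; apply: measurable_maxr => //.
Qed.

Lemma approx_ge0 (f : T -> \bar R) n w : 0 <= approx setT f n w.
Proof.
rewrite /approx; apply: addr_ge0.
  apply: sumr_ge0 => k _; apply: mulr_ge0; first exact: mulr_ge0.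
  by rewrite indicE; case: (_ \in _).
by apply: mulr_ge0 => //; rewrite indicE; case: (_ \in _).
Qed.

Lemma orth_pos (g eps : T -> R) :
  measurable_fun setT g -> measurable_fun setT eps ->
  P.-integrable setT (EFin \o eps) ->
  P.-integrable setT (EFin \o (eps \* g)) ->
  (forall B : set R, measurable B ->
    (\int[P]_(w in g @^-1` B) (eps w)%:E = 0)%E) ->
  (\int[P]_w (eps w * Num.max (g w) 0)%:E = 0)%E.
Proof.
move=> mg me ie ieg H.
pose f := fun w => (Num.max (g w) 0)%:E.
have f0 : forall w, setT w -> (0 <= f w)%E.
  by move=> w _; rewrite lee_fin le_max lexx orbT.
have gi B : measurable B -> Good (fun w => eps w * \1_(g @^-1` B) w).
  by move=> mB; apply: good_indic => //; exact: H.
have hA n k : exists2 B, measurable B & dyadic_approx setT f n k = g @^-1` B.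
  rewrite /dyadic_approx; case: ifP => _; last first.
    by exists set0; [exact: measurable0 | rewrite preimage_set0].
  exists ((fun r : R => (Num.max r 0)%:E) @^-1` (EFin @` [set` dyadic_itv R n k])).
    rewrite -[X in measurable X]setTI; apply: mphi => //.
    by apply: measurable_image_EFin; exact: measurable_itv.
  by rewrite setTI; apply/seteqP; split => w /=; rewrite in_setE.
have hB n : exists2 B, measurable B & integer_approx setT f n = g @^-1` B.
  exists ([set r : R | (n%:R%:E <= (Num.max r 0)%:E)%E]).
    rewrite -[X in measurable X]setTI; apply: measurable_lee => //.
    exact: mphi.
  by rewrite /integer_approx setTI.
have good_approx n : Good (fun w => eps w * approx setT f n w).
  pose F := fun w => \sum_(k < n * 2 ^ n)
      (k%:R * 2 ^- n) * (eps w * \1_(dyadic_approx setT f n k) w)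
    + n%:R * (eps w * \1_(integer_approx setT f n) w).
  apply: (@good_ext F).
    move=> w; rewrite /F /approx mulrDr mulr_sumr; congr (_ + _).
      by apply: eq_bigr => k _; rewrite mulrCA.
    by rewrite mulrCA.
  apply: goodD.
    apply: good_sum => k; apply: goodZ.
    by have [B mB ->] := hA n k; exact: gi.
  by apply: goodZ; have [B mB ->] := hB n; exact: gi.
have cv := @dominated_cvg _ _ _ P setT measurableT
  (fun n w => (eps w * approx setT f n w)%:E)
  (fun w => (eps w * Num.max (g w) 0)%:E)
  (fun w => (`|eps w * g w|)%:E).
have {}cv := cv (fun n => measurable_int _ (good_approx n).1).
have {}cv : (fun n => \int[P]_(w in setT) (eps w * approx setT f n w)%:E)%E
    @ \oo --> (\int[P]_(w in setT) (eps w * Num.max (g w) 0)%:E)%E.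
  apply: cv.
  - move=> w _; apply: cvg_EFin; first exact: nearW.
    rewrite (_ : fine \o _ = fun n => eps w * approx setT f n w)//.
    have := @cvg_approx _ _ _ setT f w f0 I (ltry _).
    move=> /(cvgMl_tmp (a := eps w)).
    by [].
  - by [].
  - by have := integrable_abse ieg; apply: eq_integrable => // w _ /=.
  - move=> n w _; rewrite /= lee_fin !normrM ler_wpM2l //.
    rewrite ger0_norm ?approx_ge0//.
    have := @le_approx _ _ _ setT f n w f0 I; rewrite lee_fin => /le_trans; apply.
    by rewrite ge_max normr_ge0 ler_norm.
have e : (fun n => \int[P]_(w in setT) (eps w * approx setT f n w)%:E)%E = cst 0%E.
  by apply/funext => n; exact: (good_approx n).2.
rewrite e in cv.
have h2 : (cst 0%E : nat -> \bar R) @ \oo --> 0%E by apply: cvg_cst.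
exact: (@cvg_unique _ (@ereal_hausdorff R) _ _ _ _ cv h2).

Qed.
Lemma maxBmax (x : R) : Num.max x 0 - Num.max (- x) 0 = x.
Proof.
case: (boolP (x <= 0)) => h.
  rewrite (max_r h) (max_l (_ : 0 <= - x)) ?oppr_ge0 //.
  by rewrite sub0r opprK.
rewrite -ltNge in h.
rewrite (max_l (ltW h)) (max_r (_ : - x <= 0)) ?oppr_le0 ?(ltW h) //.
by rewrite subr0.
Qed.

Lemma int_pos (g eps : T -> R) :
  measurable_fun setT g -> measurable_fun setT eps ->
  P.-integrable setT (EFin \o (eps \* g)) ->
  P.-integrable setT (EFin \o (fun w => eps w * Num.max (g w) 0)).
Proof.
move=> mg me ieg; apply: le_integrable ieg => //.
  apply/measurable_EFinP; apply: measurable_funM => //.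
  exact: measurable_maxr.
move=> w _ /=; rewrite lee_fin !normrM ler_wpM2l //.
rewrite ger0_norm ?le_max ?lexx ?orbT //.
by rewrite ge_max normr_ge0 ler_norm.
Qed.

Lemma orth (g eps : T -> R) :
  measurable_fun setT g -> measurable_fun setT eps ->
  P.-integrable setT (EFin \o eps) ->
  P.-integrable setT (EFin \o (eps \* g)) ->
  (forall B : set R, measurable B ->
    (\int[P]_(w in g @^-1` B) (eps w)%:E = 0)%E) ->
  (\int[P]_w (eps w * g w)%:E = 0)%E.
Proof.
move=> mg me ie ieg H.
have Hn (B : set R) : measurable B ->
    (\int[P]_(w in (fun w => (- g w)%R) @^-1` B) (eps w)%:E = 0)%E.
  move=> mB; have mB' : measurable (-%R @^-1` B).
    by rewrite -[X in measurable X]setTI; exact: oppr_measurable.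
  exact: H mB'.
have mgn : measurable_fun setT (fun w => - g w).
  exact: measurable_funN.
have iegn : P.-integrable setT (EFin \o (eps \* (fun w => - g w))).
  have := integrableN ieg; apply: eq_integrable => // w _ /=.
  by rewrite mulrN EFinN.
have p1 := orth_pos mg me ie ieg H.
have p2 := orth_pos mgn me ie iegn Hn.
have i1 := int_pos mg me ieg.
have i2 := int_pos mgn me iegn.
transitivity (\int[P]_w ((eps w * Num.max (g w) 0)%:E
   - (eps w * Num.max (- g w)%R 0)%R%:E))%E.
  by apply: eq_integral => w _; rewrite -EFinB -mulrBr maxBmax.
by rewrite (integralB_EFin measurableT i1 i2) p1 p2 subee.
Qed.
Definition Ef (h : T -> R) : R := fine (\int[P]_w (h w)%:E)%E.
Definition Int (h : T -> R) := P.-integrable setT (EFin \o h).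

Lemma IntD (f h : T -> R) : Int f -> Int h -> Int (fun w => f w + h w).
Proof.
move=> if0 ih; rewrite /Int.
have -> : EFin \o (fun w => f w + h w) = (EFin \o f) \+ (EFin \o h).
  by apply/funext => w /=; rewrite EFinD.
exact: integrableD.
Qed.

Lemma IntZ c (f : T -> R) : Int f -> Int (fun w => c * f w).
Proof.
move=> if0; rewrite /Int.
have -> : EFin \o (fun w => c * f w) = (fun w => c%:E * (EFin \o f) w)%E.
  by apply/funext => w /=; rewrite EFinM.
exact: integrableZl.
Qed.

Lemma Int_sum (I : Type) (s : seq I) (F : I -> T -> R) :
  (forall i, Int (F i)) -> Int (fun w => \sum_(i <- s) F i w).
Proof.
move=> iF; elim: s => [|i s ih].
  rewrite /Int (_ : EFin \o _ = cst 0%E); first exact: integrable0.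
  by apply/funext => w /=; rewrite big_nil.
rewrite (_ : (fun w => _) = (fun w => F i w + \sum_(j <- s) F j w)).
  exact: IntD.
by apply/funext => w; rewrite big_cons.
Qed.

Lemma EfD (f h : T -> R) : Int f -> Int h ->
  Ef (fun w => f w + h w) = Ef f + Ef h.
Proof.
move=> if0 ih; rewrite /Ef.
under eq_integral do rewrite EFinD.
rewrite (integralD_EFin measurableT if0 ih) fineD //.
  exact: integrable_fin_num.
exact: integrable_fin_num.
Qed.

Lemma EfZ c (f : T -> R) : Int f -> Ef (fun w => c * f w) = c * Ef f.
Proof.
move=> if0; rewrite /Ef.
under eq_integral do rewrite EFinM.
by rewrite (integralZl measurableT if0) fineM // integrable_fin_num.
Qed.

Lemma Ef_sum (I : Type) (s : seq I) (F : I -> T -> R) :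
  (forall i, Int (F i)) ->
  Ef (fun w => \sum_(i <- s) F i w) = \sum_(i <- s) Ef (F i).
Proof.
move=> iF; elim: s => [|i s ih].
  rewrite big_nil /Ef; under eq_integral do rewrite big_nil.
  by rewrite integral0.
rewrite big_cons -ih -EfD //; last exact: Int_sum.
by congr Ef; apply/funext => w; rewrite big_cons.
Qed.

Lemma EfE (h : T -> R) : fine 'E_P[h] = Ef h.
Proof. by rewrite unlock. Qed.

Lemma L1Int (h : T -> R) : h \in Lfun P 1 -> Int h.
Proof. by move/Lfun1_integrable. Qed.

Lemma L2L1 (h : T -> R) : h \in Lfun P 2%:E -> h \in Lfun P 1.
Proof. apply: Lfun_subset12; exact: fin_num_measure. Qed.

Lemma L2mul (f h : T -> R) : f \in Lfun P 2%:E -> h \in Lfun P 2%:E ->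
  Int (fun w => f w * h w).
Proof. by move=> f2 h2; apply: L1Int; exact: Lfun2_mul_Lfun1. Qed.

Lemma L2meas (h : T -> R) : h \in Lfun P 2%:E -> measurable_fun setT h.
Proof. by move=> /sub_Lfun_mfun; rewrite inE. Qed.

Lemma Ef_ge0 (h : T -> R) : (forall w, 0 <= h w) -> 0 <= Ef h.
Proof.
by move=> h0; rewrite /Ef fine_ge0 // integral_ge0 // => w _; rewrite lee_fin.
Qed.

Lemma L2_sum (I : Type) (s : seq I) (F : I -> T -> R) :
  (forall i, F i \in Lfun P 2%:E) -> \sum_(i <- s) F i \in Lfun P 2%:E.
Proof.
move=> hF; elim: s => [|i s ih].
  by rewrite big_nil; exact: (Lfun_cst P 0 2).
by rewrite big_cons rpredD ?lee1n.
Qed.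

Lemma L2B (f h : T -> R) : f \in Lfun P 2%:E -> h \in Lfun P 2%:E ->
  f \- h \in Lfun P 2%:E.
Proof. by move=> ? ?; rewrite rpredB ?lee1n. Qed.
End orth.
Theorem lemma1 (dT : measure_display) (T : measurableType dT) (R : realType)
  (P : probability T R) (d : nat) (x : 'I_d -> T -> R) (y : T -> R)
  (bstar : 'I_d -> R) (eps : T -> R) :
  (forall i, x i \in Lfun P 2) -> y \in Lfun P 2 ->
  (forall i, ('E_P[x i])%E = 0%E) ->
  (forall w, y w = dotx bstar x w + eps w) ->
  cond_exp_zero P x eps ->
  irrepresentable P x #|supp bstar| ->
  forall (S : {set 'I_d}) (b : 'I_d -> R),
    S \subset supp bstar ->
    supp b \subset S ->
    (forall b' : 'I_d -> R, supp b' \subset S ->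
       (risk P x y b <= risk P x y b')%E) ->
    \big[Num.max/0]_(j | j \notin supp bstar) `|Zcoef P x y b j|
      <= muF P x (supp bstar)
         * \big[Num.max/0]_(i in supp bstar :\: S) `|Zcoef P x y b i|.
Proof.
move=> Lx Ly Ex0 hy ce irr S b sS sb bmin.
have dotL2 (c : 'I_d -> R) : dotx c x \in Lfun P 2%:E.
  rewrite (_ : dotx c x = \sum_(i < d) (c i \o* x i)).
    by apply: L2_sum => i; apply: Lfun_scale; [rewrite ler1n | exact: Lx].
  apply/funext => w; rewrite fct_sumE /dotx /=.
  by apply: eq_bigr => i _; rewrite mulrC.
have eps2 : eps \in Lfun P 2%:E.
  rewrite (_ : eps = y \- dotx bstar x); first exact: L2B.
  by apply/funext => w /=; rewrite hy; ring.
have orthj j : Ef P (fun w => x j w * eps w) = 0.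
  have := @orth _ _ _ P (x j) eps (L2meas (Lx j)) (L2meas eps2) ce.1
    (L2mul eps2 (Lx j)).
  have H : forall B : set R, measurable B ->
      (\int[P]_(w in x j @^-1` B) (eps w)%:E = 0)%E.
    move=> B mB; apply: ce.2; apply: sub_gen_smallest.
    by exists j, B.
  move=> /(_ H) h; rewrite /Ef.
  by under eq_integral do rewrite mulrC; rewrite h.
have covE i j : fine (covariance P (x i) (x j)) = Ef P (fun w => x i w * x j w).
  rewrite covarianceE; last exact: Lfun2_mul_Lfun1; last exact: L2L1; last exact: L2L1.
  by rewrite !Ex0 mul0e sube0 EfE.
have Zlin j : Zcoef P x y b j =
    \sum_(k < d) (bstar k - b k) * fine (covariance P (x j) (x k)).
  rewrite /Zcoef EfE.
  transitivity (Ef P (fun w => x j w * eps w +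
     \sum_(k < d) (bstar k - b k) * (x j w * x k w))).
    congr Ef; apply/funext => w; rewrite hy /dotx.
    rewrite [X in x j w * X](_ : _ = eps w +
        \sum_(k < d) (bstar k - b k) * x k w).
      rewrite mulrDr mulr_sumr; congr (_ + _).
      by apply: eq_bigr => k _; rewrite mulrCA.
    rewrite (addrC _ (eps w)) -addrA; congr (_ + _).
    by rewrite -sumrB; apply: eq_bigr => k _; rewrite mulrBl.
  rewrite EfD; first last.
  - by apply: Int_sum => k; apply: IntZ; apply: L2mul.
  - exact: L2mul.
  rewrite orthj add0r Ef_sum; last by move=> k; apply: IntZ; apply: L2mul.
  by apply: eq_bigr => k _; rewrite EfZ ?covE //; apply: L2mul.
have riskE (c : 'I_d -> R) : risk P x y c =
    (Ef P (fun w => (y w - dotx c x w) * (y w - dotx c x w)))%:E.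
  rewrite /risk (_ : (fun w => (y w - dotx c x w) ^+ 2) =
     (fun w => (y w - dotx c x w) * (y w - dotx c x w))); last first.
    by apply/funext => w; rewrite expr2.
  rewrite -EfE fineK //.
  by apply: expectation_fin_num; apply: Lfun2_mul_Lfun1; exact: L2B.
have foc i : i \in S -> Zcoef P x y b i = 0.
  move=> iS.
  have r2 : y \- dotx b x \in Lfun P 2%:E by exact: L2B.
  set Z := Zcoef P x y b i.
  have ZE : Z = Ef P (fun w => x i w * (y w - dotx b x w)) by rewrite /Z /Zcoef EfE.
  set q := Ef P (fun w => x i w * x i w).
  set r0 := Ef P (fun w => (y w - dotx b x w) * (y w - dotx b x w)).
  have q0 : 0 <= q by apply: Ef_ge0 => w; rewrite -expr2 sqr_ge0.
  have key t : r0 <= r0 - 2 * t * Z + t ^+ 2 * q.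
    pose b' := fun k => b k + t * (k == i)%:R.
    have sb' : supp b' \subset S.
      apply/fintype.subsetP => k; rewrite !inE /b'.
      case: (eqVneq k i) => [-> _ //|ki].
      rewrite mulr0 addr0 => bk.
      by apply: (fintype.subsetP sb); rewrite inE.
    have := bmin b' sb'; rewrite !riskE lee_fin.
    have db w : dotx b' x w = dotx b x w + t * x i w.
      rewrite /dotx /b'; under eq_bigr do rewrite mulrDl.
      rewrite big_split /=; congr (_ + _).
      rewrite (bigD1 i) //= eqxx mulr1 big1 ?addr0 // => k /negbTE ->.
      by rewrite mulr0 mul0r.
    rewrite (_ : (fun w => (y w - dotx b' x w) * (y w - dotx b' x w)) = fun w => (y w - dotx b x w) * (y w - dotx b x w)
       + (- 2 * t) * (x i w * (y w - dotx b x w)) + t ^+ 2 * (x i w * x i w)).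
      rewrite EfD; first last.
      - by apply: IntZ; apply: L2mul.
      - apply: IntD; first by apply: L2mul; exact: r2.
        by apply: IntZ; apply: L2mul => //; exact: r2.
      rewrite EfD; first last.
      - by apply: IntZ; apply: L2mul.
      - exact: L2mul.
      rewrite !EfZ; first last.
      - exact: L2mul.
      - exact: L2mul.
      by rewrite -/r0 -/q -ZE !mulNr.
    by apply/funext => w; rewrite db; ring.
  pose t := Z / (q + 1).
  have q1 : q + 1 != 0 by rewrite gt_eqF // ltr_wpDl.
  have Zt : Z = t * (q + 1) by rewrite /t divfK.
  have tZ : t * Z = t ^+ 2 * (q + 1) by rewrite Zt expr2 mulrA.
  have h := key t.
  have ht : t ^+ 2 * (q + 2) <= 0 by nra.
  have t0 : t = 0.
    apply/eqP; rewrite -sqrf_eq0 eq_le sqr_ge0 andbT.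
    by rewrite -(pmulr_lle0 _ (_ : 0 < q + 2)) ?ltr_wpDl.
  by rewrite Zt t0 mul0r.
set F := supp bstar.
have [Su /andP[mu0 _]] := irr F erefl.
set Sig := SigmaF P x F.
have dF k : k \notin F -> bstar k - b k = 0.
  rewrite inE negbK => /eqP bk0; rewrite bk0 sub0r.
  case: (eqVneq (b k) 0) => [-> | bk]; first by rewrite oppr0.
  have : k \in F.
    apply: (fintype.subsetP sS); apply: (fintype.subsetP sb); by rewrite inE.
  by rewrite inE bk0 eqxx.
pose v : 'cV[R]_#|F| := \col_i (bstar (enum_val i) - b (enum_val i)).
pose z : 'cV[R]_#|F| := \col_i Zcoef P x y b (enum_val i).
have ZF j : Zcoef P x y b j = \sum_(i < #|F|)
    fine (covariance P (x j) (x (enum_val i))) * v i ord0.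
  rewrite Zlin (bigID (fun k => k \in F)) /= [X in _ + X]big1 ?addr0; last first.
    by move=> k kF; rewrite dF // mul0r.
  rewrite (big_enum_val (fun k => (bstar k - b k) * fine (covariance P (x j) (x k)))).
  by apply: eq_bigr => i _; rewrite mxE mulrC.
have zE : z = Sig *m v.
  apply/matrixP => i j; rewrite (ord1 j) !mxE ZF.
  by apply: eq_bigr => k _; rewrite !mxE.
have vE : v = invmx Sig *m z by rewrite zE mulKmx.
have sT : Sig^T = Sig by apply/matrixP => i k; rewrite !mxE covarianceC.
have tI : (invmx Sig)^T = invmx Sig by rewrite trmx_inv sT.
have Zmat j : Zcoef P x y b j = \sum_(k < #|F|)
    (invmx Sig *m covF P x F j) k ord0 * z k ord0.
  transitivity (((covF P x F j)^T *m v) ord0 ord0).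
    rewrite ZF mxE; apply: eq_bigr => i _; by rewrite !mxE covarianceC.
  rewrite vE mulmxA -tI -trmx_mul mxE.
  by apply: eq_bigr => k _; rewrite mxE tI.
set M := \big[Num.max/0]_(i in F :\: S) `|Zcoef P x y b i|.
have M0 : 0 <= M by rewrite /M bigmax_idl le_max lexx.
have zM k : `|z k ord0| <= M.
  rewrite mxE; case: (boolP (enum_val k \in S)) => kS.
    by rewrite foc // normr0.
  rewrite /M; apply: (le_bigmax_cond _ (fun i => `|Zcoef P x y b i|)).
  by rewrite inE kS enum_valP.
apply: bigmax_le; first by rewrite mulr_ge0.
move=> j jF.
rewrite Zmat (le_trans (ler_norm_sum _ _ _)) //.
apply: (@le_trans _ _ ((\sum_(k < #|F|) `|(invmx Sig *m covF P x F j) k ord0|) * M)).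
  rewrite mulr_suml; apply: ler_sum => k _; rewrite normrM.
  by rewrite ler_wpM2l.
rewrite ler_wpM2r //.
exact: (le_bigmax_cond _ (fun j => \sum_(k < #|F|)
   `|(invmx Sig *m covF P x F j) k ord0|) jF).
Qed.
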